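(* The compactness theorem holds for propositional team logic $\mathrm{PTL}$.
   Context: $\mathrm{PTL}$ is the closure of propositional logic $\mathrm{PL}$ under the strong negation $\sim$, the material implication (written here $\varphi\Rightarrow\psi$, true in a team iff the team falsifies $\varphi$ or satisfies $\psi$) and the linear implication $\multimap$, interpreted on teams $T$ of propositional assignments: a classical formula holds in $T$ iff it holds for every assignment in $T$; $T\models\sim\varphi$ iff $T\not\models\varphi$; $T\models\varphi\multimap\psi$ iff for all $S,U$ with $S\cup U=T$ (lax splitting), $S\models\varphi$ implies $U\models\psi$. It is a consequence of the soundness and completeness of the Hilbert-style system $\mathsf{H}^0\mathsf{L}\mathsf{S}$ for $\mathrm{PTL}$. *)

(* Defs.v *)
From Stdlib Require Import List.

Definition assignment := nat -> bool.

(* A team is an arbitrary (possibly empty, possibly infinite) set of assignments. *)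
Definition team := assignment -> Prop.

Inductive cform : Type :=
  | CVar : nat -> cform
  | CBot : cform
  | CNeg : cform -> cform
  | CAnd : cform -> cform -> cform
  | COr  : cform -> cform -> cform
  | CImp : cform -> cform -> cform.

Fixpoint ceval (s : assignment) (a : cform) : bool :=
  match a with
  | CVar p => s p
  | CBot => false
  | CNeg b => negb (ceval s b)
  | CAnd b c => andb (ceval s b) (ceval s c)
  | COr b c => orb (ceval s b) (ceval s c)
  | CImp b c => orb (negb (ceval s b)) (ceval s c)
  end.

Inductive form : Type :=
  | Cl   : cform -> form
  | SNeg : form -> form
  | MImp : form -> form -> form
  | LImp : form -> form -> form.

Fixpoint sat (T : team) (phi : form) : Prop :=
  match phi with
  | Cl a => forall s, T s -> ceval s a = true
  | SNeg f => ~ sat T f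
  | MImp f g => ~ sat T f \/ sat T g
  | LImp f g => forall S U : team,
      (forall s, T s <-> (S s \/ U s)) -> sat S f -> sat U g
  end.

Definition entails (Gamma : form -> Prop) (phi : form) : Prop :=
  forall T : team, (forall g, Gamma g -> sat T g) -> sat T phi.

(* Main.v *)
Require Import Defs.
From Stdlib Require Import List.
From Stdlib Require Import Arith Lia Classical ClassicalEpsilon.
Import ListNotations.

Definition pre (n:nat) (s:assignment) : list bool := map s (seq 0 n).
Definition proj n (T:team) (w:list bool) := exists s, T s /\ pre n s = w.
Definition equiv n (T T':team) := forall w, proj n T w <-> proj n T' w.

Lemma map_seq_agree : forall n a (s t:assignment),
  map s (seq a n) = map t (seq a n) <-> (forall i, a <= i < a + n -> s i = t i).
Proof. induction n; intros; simpl; split.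
 - intros; lia.
 - auto.
 - intros H i Hi. injection H as H1 H2. destruct (Nat.eq_dec i a). subst; auto.
   apply (proj1 (IHn (S a) s t) H2); lia.
 - intros H. f_equal. apply H; lia. apply IHn. intros; apply H; lia.
Qed.

Lemma pre_agree n s t : pre n s = pre n t <-> (forall i, i < n -> s i = t i).
Proof. unfold pre. rewrite map_seq_agree. split; intros H i Hi; apply H; lia. Qed.

Lemma pre_mono k m s t : k <= m -> pre m s = pre m t -> pre k s = pre k t.
Proof. intros Hk H. apply pre_agree. intros i Hi. apply (proj1 (pre_agree m s t) H). lia. Qed.

Lemma equiv_sym n T T' : equiv n T T' -> equiv n T' T. Proof. intros H w; pose proof (H w); tauto. Qed.
Lemma equiv_trans n T1 T2 T3 : equiv n T1 T2 -> equiv n T2 T3 -> equiv n T1 T3.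
Proof. intros H1 H2 w; pose proof (H1 w); pose proof (H2 w); tauto. Qed.

Lemma equiv_mono k m T T' : k <= m -> equiv m T T' -> equiv k T T'.
Proof. intros Hk H w; split; intros [s [Hs Hw]]; subst w.
 - destruct (proj1 (H (pre m s)) (ex_intro _ s (conj Hs eq_refl))) as [t [Ht Htw]].
   exists t; split; auto. apply (pre_mono k m); auto.
 - destruct (proj2 (H (pre m s)) (ex_intro _ s (conj Hs eq_refl))) as [t [Ht Htw]].
   exists t; split; auto. apply (pre_mono k m); auto.
Qed.

Fixpoint cbound (a:cform) : nat := match a with
 | CVar p => S p | CBot => 0 | CNeg b => cbound b
 | CAnd b c | COr b c | CImp b c => Nat.max (cbound b) (cbound c) end.
Fixpoint fbound (f:form) : nat := match f with
 | Cl a => cbound a | SNeg g => fbound g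
 | MImp g h | LImp g h => Nat.max (fbound g) (fbound h) end.

Lemma ceval_local : forall a n s t, cbound a <= n -> (forall i, i < n -> s i = t i) ->
  ceval s a = ceval t a.
Proof. induction a; simpl; intros m s t Hb H.
 - apply H; lia.
 - reflexivity.
 - rewrite (IHa m s t) by (auto; lia). reflexivity.
 - rewrite (IHa1 m s t) by (auto; lia). rewrite (IHa2 m s t) by (auto; lia). reflexivity.
 - rewrite (IHa1 m s t) by (auto; lia). rewrite (IHa2 m s t) by (auto; lia). reflexivity.
 - rewrite (IHa1 m s t) by (auto; lia). rewrite (IHa2 m s t) by (auto; lia). reflexivity.
Qed.

Lemma split_transfer n T T' S U : equiv n T T' -> (forall s, T' s <-> S s \/ U s) ->
  exists S0 U0, (forall s, T s <-> S0 s \/ U0 s) /\ equiv n S0 S /\ equiv n U0 U.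
Proof. intros HE HS.
 exists (fun s => T s /\ exists s', S s' /\ pre n s' = pre n s).
 exists (fun s => T s /\ exists s', U s' /\ pre n s' = pre n s).
 split; [|split].
 - intro s; split.
   + intro Hs. destruct (proj1 (HE (pre n s)) (ex_intro _ s (conj Hs eq_refl))) as [t [Ht Htw]].
     apply HS in Ht. destruct Ht as [Ht|Ht]; [left|right]; split; eauto.
   + intros [[H _]|[H _]]; auto.
 - intro w; split.
   + intros [s [[Hs [s' [Hs' Hp]]] Hw]]. exists s'; split; congruence.
   + intros [s [Hs Hw]]. assert (HT' : T' s) by (apply HS; auto).
     destruct (proj2 (HE (pre n s)) (ex_intro _ s (conj HT' eq_refl))) as [t [Ht Htw]].
     exists t; split; [split; [auto| exists s; split; congruence] | congruence].
 - intro w; split.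
   + intros [s [[Hs [s' [Hs' Hp]]] Hw]]. exists s'; split; congruence.
   + intros [s [Hs Hw]]. assert (HT' : T' s) by (apply HS; auto).
     destruct (proj2 (HE (pre n s)) (ex_intro _ s (conj HT' eq_refl))) as [t [Ht Htw]].
     exists t; split; [split; [auto| exists s; split; congruence] | congruence].
Qed.

Lemma locality : forall f n T T', fbound f <= n -> equiv n T T' -> (sat T f <-> sat T' f).
Proof. induction f; simpl; intros n T T' Hb HE.
 - split; intros H s Hs.
   + destruct (proj2 (HE (pre n s)) (ex_intro _ s (conj Hs eq_refl))) as [t [Ht Htw]].
     rewrite (ceval_local c n s t Hb). apply H; auto.
     apply (proj1 (pre_agree n s t)); symmetry; exact Htw.
   + destruct (proj1 (HE (pre n s)) (ex_intro _ s (conj Hs eq_refl))) as [t [Ht Htw]].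
     rewrite (ceval_local c n s t Hb). apply H; auto.
     apply (proj1 (pre_agree n s t)); symmetry; exact Htw.
 - rewrite (IHf n T T' Hb HE); tauto.
 - rewrite (IHf1 n T T' ltac:(lia) HE), (IHf2 n T T' ltac:(lia) HE); tauto.
 - split; intros H S U HSU HS.
   + destruct (split_transfer n T T' S U HE HSU) as [S0 [U0 [H1 [H2 H3]]]].
     apply (proj1 (IHf2 n U0 U ltac:(lia) H3)). apply (H S0 U0 H1).
     apply (proj2 (IHf1 n S0 S ltac:(lia) H2)); auto.
   + destruct (split_transfer n T' T S U (equiv_sym _ _ _ HE) HSU) as [S0 [U0 [H1 [H2 H3]]]].
     apply (proj1 (IHf2 n U0 U ltac:(lia) H3)). apply (H S0 U0 H1).
     apply (proj2 (IHf1 n S0 S ltac:(lia) H2)); auto.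
Qed.

Fixpoint words n : list (list bool) := match n with
 | 0 => [nil]
 | S m => map (cons true) (words m) ++ map (cons false) (words m) end.

Lemma words_complete : forall n w, length w = n -> In w (words n).
Proof. induction n; intros w Hw; destruct w; simpl in *; try discriminate; auto.
 injection Hw as Hw. apply in_or_app. destruct b; [left|right]; apply in_map; auto. Qed.

Lemma pre_length n s : length (pre n s) = n.
Proof. unfold pre; rewrite length_map, length_seq; auto. Qed.

Fixpoint subsets {A} (l:list A) : list (list A) := match l with
 | nil => [nil]
 | a::l' => map (cons a) (subsets l') ++ subsets l' end.

Lemma subsets_pred {A} : forall (W:list A) (P:A->Prop), (forall w, P w -> In w W) ->
  exists L, In L (subsets W) /\ forall w, P w <-> In w L.
Proof. induction W as [|a W IH]; intros P HP; simpl.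
 - exists nil; split; auto. intro w; split; [intro H; apply (HP w H) | intros []].
 - destruct (IH (fun w => P w /\ w <> a)) as [L [HL HLP]].
   { intros w [Hw Hne]. destruct (HP w Hw); [congruence|auto]. }
   destruct (classic (P a)) as [Pa|nPa].
   + exists (a::L); split. apply in_or_app; left; apply in_map; auto.
     intro w; simpl. destruct (classic (w = a)) as [->|Hne]. tauto.
     rewrite <- HLP. split.
     * intro Hp; right; split; auto.
     * intros [H|[H _]]; [congruence|auto].
   + exists L; split. apply in_or_app; right; auto. intro w; rewrite <- HLP. split.
     * intro Hw; split; [auto| intro; subst; contradiction].
     * tauto.
Qed.

Lemma reps_list {A B} : forall (X:list A) (Q:A->B->Prop), exists R:list B,
  forall x, In x X -> (exists b, Q x b) -> exists r, In r R /\ Q x r.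
Proof. induction X as [|a X IH]; intros Q.
 - exists nil; intros x [].
 - destruct (IH Q) as [R HR]. destruct (classic (exists b, Q a b)) as [[b Hb]|Hn].
   + exists (b::R). intros x [Hx|Hx] Hex. subst. exists b; simpl; auto.
     destruct (HR x Hx Hex) as [r [Hr Hq]]; exists r; simpl; auto.
   + exists R. intros x [Hx|Hx] Hex. subst; contradiction. auto.
Qed.

Lemma finite_classes n : exists R : list team, forall T, exists T0, In T0 R /\ equiv n T T0.
Proof. destruct (reps_list (subsets (words n)) (fun L T => forall w, proj n T w <-> In w L)) as [R HR].
 exists R. intro T. destruct (subsets_pred (words n) (proj n T)) as [L [HL HLP]].
 { intros w [s [_ Hw]]. subst. apply words_complete, pre_length. }
 destruct (HR L HL (ex_intro _ T HLP)) as [r [Hr Hq]]. exists r; split; auto.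
 intro w; pose proof (HLP w); pose proof (Hq w); tauto.
Qed.

Definition satL (L:list form) (T:team) := forall g, In g L -> sat T g.
Definition goodC (Gam:form->Prop) (phi:form) (C:team->Prop) :=
  forall D:list form, (forall g, In g D -> Gam g) -> exists T, C T /\ satL D T /\ ~ sat T phi.
Definition good Gam phi n T := goodC Gam phi (equiv n T).

Lemma step Gam phi (C:team->Prop) n : (forall T1 T2, C T1 -> equiv n T1 T2 -> C T2) ->
  goodC Gam phi C -> exists T, C T /\ good Gam phi n T.
Proof. intros Hinv HG. apply NNPP; intro Hno.
 destruct (finite_classes n) as [R HR].
 assert (HD : forall Rl, exists D, (forall g, In g D -> Gam g) /\ forall r, In r Rl -> C r ->
   forall T, equiv n r T -> satL D T -> ~ sat T phi -> False).
 { induction Rl as [|r Rl IH].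
   - exists nil; split; [intros g []| intros r []].
   - destruct IH as [D1 [HD1 HB1]].
     destruct (classic (C r)) as [Cr|nCr].
     + assert (exists D2, (forall g, In g D2 -> Gam g) /\
          forall T, equiv n r T -> satL D2 T -> ~ sat T phi -> False) as [D2 [HD2 HB2]].
       { apply NNPP; intro H2; apply Hno; exists r; split; auto; intros D HD.
         apply NNPP; intro H3; apply H2; exists D; split; auto; intros T h1 h2 h3;
         apply H3; exists T; auto. }
       exists (D1 ++ D2); split.
       * intros g Hg; apply in_app_or in Hg; destruct Hg; auto.
       * intros r' [Hr|Hr] Cr' T HE HS HN.
         -- subst r'. apply (HB2 T HE); auto. intros g Hg; apply HS, in_or_app; auto.
         -- apply (HB1 r' Hr Cr' T HE); auto. intros g Hg; apply HS, in_or_app; auto.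
     + exists D1; split; auto. intros r' [Hr|Hr] Cr' T HE HS HN.
       -- subst; contradiction.
       -- apply (HB1 r' Hr Cr' T HE); auto. }
 destruct (HD R) as [D [HDG HB]].
 destruct (HG D HDG) as [T [CT [HS HN]]].
 destruct (HR T) as [r [Hr HE]].
 apply (HB r Hr (Hinv T r CT HE) T (equiv_sym _ _ _ HE) HS HN).
Qed.

Definition inhT : inhabited team := inhabits (fun _ => False).

Definition nextT Gam phi n T :=
  epsilon inhT (fun T2 => equiv n T T2 /\ good Gam phi (S n) T2).

Fixpoint tseq Gam phi (n:nat) : team := match n with
 | 0 => epsilon inhT (fun T => good Gam phi 0 T)
 | S m => nextT Gam phi m (tseq Gam phi m) end.

Lemma tseq_spec Gam phi : goodC Gam phi (fun _ => True) ->
  forall n, good Gam phi n (tseq Gam phi n) /\ equiv n (tseq Gam phi n) (tseq Gam phi (S n)).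
Proof. intros H0.
 assert (Hn : forall n T, good Gam phi n T ->
   equiv n T (nextT Gam phi n T) /\ good Gam phi (S n) (nextT Gam phi n T)).
 { intros n T HT. unfold nextT. apply epsilon_spec.
   apply (step Gam phi (equiv n T) (S n)); auto.
   intros T1 T2 H1 H2. apply (equiv_trans n T T1 T2); auto.
   apply (equiv_mono n (S n)); auto. }
 assert (Hg : forall n, good Gam phi n (tseq Gam phi n)).
 { induction n; simpl.
   - apply epsilon_spec. destruct (step Gam phi (fun _ => True) 0) as [T [_ HT]]; eauto.
   - apply Hn; auto. }
 intro n; split; auto. simpl. apply Hn; auto.
Qed.

Lemma chain Gam phi : goodC Gam phi (fun _ => True) ->
  forall k m, k <= m -> equiv k (tseq Gam phi k) (tseq Gam phi m).
Proof. intros H0 k m Hkm. induction Hkm.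
 - intro; tauto.
 - apply (equiv_trans k _ (tseq Gam phi m)); auto.
   apply (equiv_mono k m); auto. apply tseq_spec; auto.
Qed.

Definition Tinf Gam phi : team := fun s => forall k, proj k (tseq Gam phi k) (pre k s).

Lemma Tinf_equiv Gam phi : goodC Gam phi (fun _ => True) ->
  forall k, equiv k (Tinf Gam phi) (tseq Gam phi k).
Proof. intros H0 k w; split.
 - intros [s [Hs Hw]]. subst. apply Hs.
 - intros [t [Ht Hw]]. subst w.
   set (bnext := fun m (u:assignment) =>
     epsilon (inhabits u) (fun u' => tseq Gam phi (S m) u' /\ pre m u' = pre m u)).
   assert (Hbn : forall m u, tseq Gam phi m u ->
     tseq Gam phi (S m) (bnext m u) /\ pre m (bnext m u) = pre m u).
   { intros m u Hu. unfold bnext. apply epsilon_spec.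
     destruct (proj1 (proj2 (tseq_spec Gam phi H0 m) (pre m u)) (ex_intro _ u (conj Hu eq_refl)))
       as [u' [Hu' Hp]]. exists u'; auto. }
   set (b := fix b (i:nat) : assignment := match i with 0 => t | S i => bnext (k+i) (b i) end).
   assert (Hb : forall i, tseq Gam phi (k+i) (b i)).
   { induction i; simpl. rewrite Nat.add_0_r; auto.
     rewrite Nat.add_succ_r. apply Hbn; auto. }
   assert (Hagr : forall i i', i <= i' -> pre (k+i) (b i') = pre (k+i) (b i)).
   { intros i i' Hi. induction Hi. reflexivity.
     rewrite <- IHHi. simpl. apply (pre_mono (k+i) (k+m)); [lia|]. apply Hbn; auto. }
   set (s := fun x => b (S x) x).
   assert (Hs : forall i, pre (k+i) s = pre (k+i) (b i)).
   { intro i. apply pre_agree. intros x Hx. unfold s.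
     destruct (le_lt_dec (S x) i) as [H1|H1].
     - apply (proj1 (pre_agree (k + S x) _ _) (eq_sym (Hagr (S x) i H1))). lia.
     - apply (proj1 (pre_agree (k + i) _ _) (Hagr i (S x) ltac:(lia))). lia. }
   exists s; split.
   + intro j. apply (proj2 (chain Gam phi H0 j (k+j) ltac:(lia) (pre j s))).
     exists (b j); split; auto. apply (pre_mono j (k+j)); [lia|]. symmetry; auto.
   + pose proof (Hs 0) as H. rewrite Nat.add_0_r in H. exact H.
Qed.

Theorem mainTheorem2 :
  forall (Gamma : form -> Prop) (phi : form),
    entails Gamma phi ->
    exists Delta : list form,
      (forall g, In g Delta -> Gamma g) /\
      entails (fun g => In g Delta) phi.
Proof.
  intros Gam phi Hent. apply NNPP; intro Hno.
  assert (H0 : goodC Gam phi (fun _ => True)).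
  { intros D HD. apply NNPP; intro H. apply Hno. exists D; split; auto.
    intros T HT. apply NNPP; intro Hn. apply H; exists T; auto. }
  assert (Hloc : forall f, exists T, equiv (fbound f) (Tinf Gam phi) T /\
     (Gam f -> sat T f) /\ ~ sat T phi).
  { intro f. destruct (classic (Gam f)) as [Gf|nGf].
    - destruct (proj1 (tseq_spec Gam phi H0 (fbound f)) [f]) as [T [HE [HS HN]]].
      { intros g [<-|[]]; auto. }
      exists T; split; [|split; auto].
      + apply (equiv_trans _ _ (tseq Gam phi (fbound f))); auto. apply Tinf_equiv; auto.
      + intros _. apply HS; simpl; auto.
    - destruct (proj1 (tseq_spec Gam phi H0 (fbound f)) nil) as [T [HE [HS HN]]].
      { intros g []. }
      exists T; split; [|split; auto].
      + apply (equiv_trans _ _ (tseq Gam phi (fbound f))); auto. apply Tinf_equiv; auto.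
      + intro; contradiction. }
  assert (HG : forall g, Gam g -> sat (Tinf Gam phi) g).
  { intros g Hg. destruct (Hloc g) as [T [HE [HS _]]].
    apply (proj2 (locality g _ _ _ (le_n _) HE)); auto. }
  destruct (Hloc phi) as [T [HE [_ HN]]].
  apply HN. apply (proj1 (locality phi _ _ _ (le_n _) HE)). apply Hent; auto.
Qed.
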